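(* Let $\mathbb{X}=\ell_\infty^3$ and let $\mathbb{Y}$ be a two-dimensional polygonal Banach space. Let $T\in\mathbb{L}(\mathbb{X},\mathbb{Y})$ with $\|T\|=1$. Then $T$ is an extreme contraction if and only if $|M_T\cap\operatorname{Ext}(B_{\mathbb{X}})|\geq 6$ and $T(M_T\cap\operatorname{Ext}(B_{\mathbb{X}}))\subseteq\operatorname{Ext}(B_{\mathbb{Y}})$.
   Context: $\mathbb{L}(\mathbb{X},\mathbb{Y})$ is the space of linear operators with the operator norm. $B_{\mathbb{X}}$ denotes the closed unit ball and $\operatorname{Ext}(\cdot)$ the set of its extreme points; $M_T=\{x\in\mathbb{X}:\|x\|=1,\ \|Tx\|=\|T\|\}$. A two-dimensional Banach space is polygonal if its unit ball has only finitely many extreme points. $T$ is an extreme contraction if it is an extreme point of the unit ball of $\mathbb{L}(\mathbb{X},\mathbb{Y})$. *)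

(* Defs.v *)
From HB Require Import structures.
From mathcomp Require Import all_boot all_order all_algebra.
From mathcomp Require Import all_classical all_reals.
Set Implicit Arguments. Unset Strict Implicit. Unset Printing Implicit Defensive.
Import Order.TTheory GRing.Theory Num.Theory.
Local Open Scope ring_scope.
Local Open Scope classical_set_scope.

Definition extreme_point (R : realType) (V : lmodType R) (S : set V) (x : V) : Prop :=
  S x /\ forall (y z : V) (t : R), S y -> S z -> 0 < t -> t < 1 ->
    x = t *: y + (1 - t) *: z -> y = z.

Definition linf3 (R : realType) (x : 'cV[R]_3) : R :=
  \big[Num.max/0]_(i < 3) `|x i 0|.

(* N is a norm on R^2; any norm on R^2 gives a Banach space. *)
Definition is_norm2 (R : realType) (N : 'cV[R]_2 -> R) : Prop :=
  [/\ (forall x, N x = 0 -> x = 0),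
      (forall (a : R) x, N (a *: x) = `|a| * N x) &
      (forall x y, N (x + y) <= N x + N y)].

Definition ballX (R : realType) : set 'cV[R]_3 := [set x | linf3 x <= 1].
Definition ballY (R : realType) (N : 'cV[R]_2 -> R) : set 'cV[R]_2 := [set y | N y <= 1].

Definition polygonal (R : realType) (N : 'cV[R]_2 -> R) : Prop :=
  finite_set (extreme_point (ballY N)).

Definition opnorm (R : realType) (N : 'cV[R]_2 -> R) (T : 'M[R]_(2,3)) : R :=
  sup [set r | exists x, @ballX R x /\ r = N (T *m x)].

Definition MT (R : realType) (N : 'cV[R]_2 -> R) (T : 'M[R]_(2,3)) : set 'cV[R]_3 :=
  [set x | linf3 x = 1 /\ N (T *m x) = opnorm N T].

Definition extreme_contraction (R : realType) (N : 'cV[R]_2 -> R) (T : 'M[R]_(2,3)) : Prop :=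
  extreme_point [set S : 'M[R]_(2,3) | opnorm N S <= 1] T.

(* Main.v *)
Require Import Defs.
From HB Require Import structures.
From mathcomp Require Import all_boot all_order all_algebra.
From mathcomp Require Import all_classical all_reals.
From mathcomp Require Import ring lra.
Import Order.TTheory GRing.Theory Num.Theory.
Local Open Scope ring_scope.
Local Open Scope classical_set_scope.
Set Implicit Arguments. Unset Strict Implicit. Unset Printing Implicit Defensive.

Section Basics.
Variable R : realType.
Variable N : 'cV[R]_2 -> R.
Hypothesis hN : is_norm2 N.

Lemma N0 : N 0 = 0.
Proof. case: hN => _ hZ _. by rewrite -(scale0r (0:'cV[R]_2)) hZ normr0 mul0r. Qed.

Lemma NZ a x : N (a *: x) = `|a| * N x.
Proof. by case: hN => _ hZ _. Qed.

Lemma ND x y : N (x + y) <= N x + N y.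
Proof. by case: hN. Qed.

Lemma NN x : N (- x) = N x.
Proof. by rewrite -scaleN1r NZ normrN normr1 mul1r. Qed.

Lemma Nge0 x : 0 <= N x.
Proof.
have := ND x (- x); rewrite subrr N0 NN => h.
lra.
Qed.

Lemma Neq0 x : N x = 0 -> x = 0.
Proof. case: hN => H _ _; exact: H. Qed.

Lemma Ngt0 x : x != 0 -> 0 < N x.
Proof.
move=> hx; rewrite lt_def Nge0 andbT; apply/eqP => h; move/eqP: hx; apply.
exact: Neq0.
Qed.

Lemma Nconv t x y : 0 <= t -> t <= 1 ->
  N (t *: x + (1 - t) *: y) <= t * N x + (1 - t) * N y.
Proof.
move=> h0 h1; apply: (le_trans (ND _ _)); rewrite !NZ.
have h2 : 0 <= 1 - t by rewrite subr_ge0.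
by rewrite (ger0_norm h0) (ger0_norm h2).
Qed.

Lemma Nconv1 t x y : 0 <= t -> t <= 1 -> N x <= 1 -> N y <= 1 ->
  N (t *: x + (1 - t) *: y) <= 1.
Proof.
move=> h0 h1 hx hy; apply: (le_trans (Nconv _ _ h0 h1)).
have : t * N x <= t by rewrite -{2}(mulr1 t) ler_wpM2l.
have : (1 - t) * N y <= 1 - t by rewrite -{2}(mulr1 (1 - t)) ler_wpM2l // subr_ge0.
lra.
Qed.


Definition sg (b : bool) : R := if b then 1 else -1.
Definition i0 : 'I_3 := ord0.
Definition i1 : 'I_3 := lift ord0 (ord0 : 'I_2).
Definition i2 : 'I_3 := lift ord0 (lift ord0 (ord0 : 'I_1)).

Definition sv (b0 b1 b2 : bool) : 'cV[R]_3 :=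
  \col_(i < 3) sg (if (i : nat) == 0%N then b0 else if (i : nat) == 1%N then b1 else b2).

Lemma sgN b : sg (~~ b) = - sg b.
Proof. by case: b => /=; rewrite ?opprK. Qed.

Lemma sg_norm b : `|sg b| = 1.
Proof. by case: b; rewrite /= ?normrN normr1. Qed.

Lemma sg_sq b : sg b * sg b = 1.
Proof. by case: b; rewrite /= ?mulrNN mulr1. Qed.

Lemma mulmx3 (S : 'M[R]_(2,3)) (x : 'cV[R]_3) :
  S *m x = x i0 0 *: col i0 S + x i1 0 *: col i1 S + x i2 0 *: col i2 S.
Proof.
apply/matrixP => i j; rewrite (ord1 j) !mxE !big_ord_recl big_ord0 ?mxE /i0 /i1 /i2.
ring.
Qed.

Lemma mulmx_sv (S : 'M[R]_(2,3)) b0 b1 b2 :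
  S *m sv b0 b1 b2 = sg b0 *: col i0 S + sg b1 *: col i1 S + sg b2 *: col i2 S.
Proof. by rewrite mulmx3 !mxE. Qed.

Lemma linf3E (x : 'cV[R]_3) : linf3 x = Num.max `|x i0 0| (Num.max `|x i1 0| (Num.max `|x i2 0| 0)).
Proof. by rewrite /linf3 !big_ord_recl big_ord0. Qed.

Lemma linf3_le (x : 'cV[R]_3) r : (linf3 x <= r) = [&& `|x i0 0| <= r, `|x i1 0| <= r, `|x i2 0| <= r & 0 <= r].
Proof. by rewrite linf3E !ge_max. Qed.

Lemma ballXP (x : 'cV[R]_3) : ballX x <-> [/\ `|x i0 0| <= 1, `|x i1 0| <= 1 & `|x i2 0| <= 1].
Proof.
rewrite /ballX /= linf3_le ler01 andbT; split.
  by case/and3P.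
by case=> -> -> ->.
Qed.

Lemma linf3_sv b0 b1 b2 : linf3 (sv b0 b1 b2) = 1.
Proof.
rewrite linf3E !mxE /= !sg_norm.
by rewrite (@maxEle _ _ 1 0) ler10 !maxxx.
Qed.


Lemma conv_step (c y : 'cV[R]_2) a :
  (forall b, N (sg b *: c + y) <= 1) -> `|a| <= 1 -> N (a *: c + y) <= 1.
Proof.
move=> H ha; have h1 := H true; have h2 := H false; rewrite /= in h1 h2.
have -> : a *: c + y = ((1 + a) / 2) *: (1 *: c + y) + (1 - (1 + a) / 2) *: ((-1) *: c + y).
  by apply/matrixP => i j; rewrite !mxE; field.
move: ha; rewrite ler_norml => /andP [ha1 ha2].
apply: Nconv1 => //; lra.
Qed.

Lemma cube (c0 c1 c2 : 'cV[R]_2) a0 a1 a2 :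
  (forall b0 b1 b2, N (sg b0 *: c0 + sg b1 *: c1 + sg b2 *: c2) <= 1) ->
  `|a0| <= 1 -> `|a1| <= 1 -> `|a2| <= 1 ->
  N (a0 *: c0 + a1 *: c1 + a2 *: c2) <= 1.
Proof.
move=> H h0 h1 h2.
rewrite -addrA; apply: conv_step => // b0.
rewrite (addrCA (sg b0 *: c0)); apply: conv_step => // b1.
rewrite (addrCA (sg b1 *: c1)) (addrA (sg b0 *: c0)) (addrC _ (a2 *: c2)).
apply: conv_step => // b2.
rewrite (addrC (sg b2 *: c2)); exact: H.
Qed.

Definition colsum (S : 'M[R]_(2,3)) := N (col i0 S) + N (col i1 S) + N (col i2 S).

Lemma Nbound (S : 'M[R]_(2,3)) x : ballX x -> N (S *m x) <= colsum S.
Proof.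
case/ballXP => h0 h1 h2; rewrite mulmx3 /colsum.
apply: (le_trans (ND _ _)); apply: lerD; first apply: (le_trans (ND _ _)); first apply: lerD.
all: rewrite NZ -[X in _ <= X]mul1r; apply: ler_wpM2r => //; exact: Nge0.
Qed.

Definition opset (S : 'M[R]_(2,3)) := [set r | exists x, @ballX R x /\ r = N (S *m x)].

Lemma opset_ub S : has_ubound (opset S).
Proof. by exists (colsum S) => r [x [hx ->]]; exact: Nbound. Qed.

Lemma N_le_opnorm S x : ballX x -> N (S *m x) <= opnorm N S.
Proof. move=> hx; apply: ub_le_sup; [exact: opset_ub | by exists x]. Qed.

Lemma sv_ball b0 b1 b2 : ballX (sv b0 b1 b2).
Proof. by rewrite /ballX /= linf3_sv. Qed.

Lemma opnorm_le1 S :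
  (forall b0 b1 b2, N (S *m sv b0 b1 b2) <= 1) -> opnorm N S <= 1.
Proof.
move=> H; apply: ge_sup.
  by exists (N (S *m sv true true true)), (sv true true true); split => //; exact: sv_ball.
move=> r [x [hx ->]]; case/ballXP: hx => h0 h1 h2; rewrite mulmx3.
apply: cube => // b0 b1 b2; by rewrite -mulmx_sv.
Qed.

Lemma opnorm_sv S b0 b1 b2 : N (S *m sv b0 b1 b2) <= opnorm N S.
Proof. exact/N_le_opnorm/sv_ball. Qed.


Lemma ord3P (i : 'I_3) : i = i0 \/ i = i1 \/ i = i2.
Proof.
case: i => [[|[|[|n]]] hi].
- by left; apply: val_inj.
- by right; left; apply: val_inj.
- by right; right; apply: val_inj.
- by [].
Qed.

Lemma ballX_all (x : 'cV[R]_3) : ballX x <-> forall k, `|x k 0| <= 1.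
Proof.
rewrite ballXP; split.
  by case=> h0 h1 h2 k; case: (ord3P k) => [->|[->|->]].
by move=> H; split; apply: H.
Qed.

Lemma coord_ext (s t a b : R) : `|s| = 1 -> s = t * a + (1 - t) * b ->
  `|a| <= 1 -> `|b| <= 1 -> 0 < t -> t < 1 -> a = b.
Proof.
move=> hs he; rewrite !ler_norml => /andP[ha1 ha2] /andP[hb1 hb2] ht0 ht1.
move/eqP: hs; rewrite eqr_norml => /andP [/orP [] /eqP hs _]; subst s.
- have h1 : 0 <= t * (1 - a) by apply: mulr_ge0; lra.
  have h2 : 0 <= (1 - t) * (1 - b) by apply: mulr_ge0; lra.
  have h3 : t * (1 - a) = 0 by nra.
  have h4 : (1 - t) * (1 - b) = 0 by nra.
  move/eqP: h3; rewrite mulf_eq0 => /orP [] /eqP h3; first lra.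
  move/eqP: h4; rewrite mulf_eq0 => /orP [] /eqP h4; lra.
- have h1 : 0 <= t * (1 + a) by apply: mulr_ge0; lra.
  have h2 : 0 <= (1 - t) * (1 + b) by apply: mulr_ge0; lra.
  have h3 : t * (1 + a) = 0 by nra.
  have h4 : (1 - t) * (1 + b) = 0 by nra.
  move/eqP: h3; rewrite mulf_eq0 => /orP [] /eqP h3; first lra.
  move/eqP: h4; rewrite mulf_eq0 => /orP [] /eqP h4; lra.
Qed.

Lemma sv_extreme b0 b1 b2 : extreme_point (@ballX R) (sv b0 b1 b2).
Proof.
split; first exact: sv_ball.
move=> y z t /ballX_all hy /ballX_all hz ht0 ht1 he.
apply/matrixP => i j; rewrite (ord1 j).
have hs : `|sv b0 b1 b2 i 0| = 1.
  by case: (ord3P i) => [->|[->|->]]; rewrite mxE /= sg_norm.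
apply: (coord_ext hs _ (hy i) (hz i) ht0 ht1).
by rewrite he !mxE.
Qed.

Lemma ext_sv (x : 'cV[R]_3) : extreme_point (@ballX R) x ->
  exists b0 b1 b2, x = sv b0 b1 b2.
Proof.
case=> hx hext.
have hk : forall k, `|x k 0| = 1.
  move=> k; apply/eqP; rewrite eq_le; have /ballX_all hk := hx; rewrite hk /=.
  rewrite leNgt; apply/negP => hlt.
  pose e := 1 - `|x k 0|.
  have he : 0 < e by rewrite /e subr_gt0.
  pose d : 'cV[R]_3 := e *: delta_mx k 0.
  have hd : forall l, d l 0 = if l == k then e else 0.
    by move=> l; rewrite !mxE eqxx andbT; case: (l == k); rewrite ?mulr1 ?mulr0.
  have hy : ballX (x + d).
    apply/ballX_all => l; rewrite mxE hd; case: ifP => [/eqP ->|_].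
      by apply: (le_trans (ler_normD _ _)); rewrite (gtr0_norm he) /e; lra.
    by rewrite addr0 (ballX_all x).1.
  have hz : ballX (x - d).
    apply/ballX_all => l; rewrite [(x - d) l 0]mxE [(- d) l 0]mxE hd; case: ifP => [/eqP ->|_].
      by apply: (le_trans (ler_normD _ _)); rewrite normrN (gtr0_norm he) /e; lra.
    by rewrite oppr0 addr0 (ballX_all x).1.
  have := hext _ _ (1 / 2) hy hz. 
  have h2 : (0 : R) < 1 / 2 by lra.
  have h3 : (1 : R) / 2 < 1 by lra.
  move=> /(_ h2 h3) H.
  have : x + d = x - d.
    by apply: H; apply/matrixP => i j; rewrite !mxE; field.
  move/matrixP/(_ k 0); rewrite [(x + d) k 0]mxE [(x - d) k 0]mxE [(- d) k 0]mxE hd eqxx.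
  lra.
exists (0 < x i0 0), (0 < x i1 0), (0 < x i2 0).
apply/matrixP => i j; rewrite (ord1 j).
have H : forall l, x l 0 = sg (0 < x l 0).
  move=> l; have := hk l; rewrite /sg; case: ifP => h.
    by rewrite gtr0_norm.
  by move/negbT: h; rewrite -leNgt => h; rewrite ler0_norm // => <-; rewrite opprK.
by case: (ord3P i) => [->|[->|->]]; rewrite mxE /= -H.
Qed.


Definition phi (r0 r1 r2 : R) b0 b1 b2 := sg b0 * r0 + sg b1 * r1 + sg b2 * r2.

Definition pmx (t r0 r1 r2 : R) (w : 'cV[R]_2) : 'M[R]_(2,3) :=
  \matrix_(i < 2, j < 3)
    (t * (if (j : nat) == 0%N then r0 else if (j : nat) == 1%N then r1 else r2) * w i 0).

Lemma pmx_sv t r0 r1 r2 w b0 b1 b2 :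
  pmx t r0 r1 r2 w *m sv b0 b1 b2 = (t * phi r0 r1 r2 b0 b1 b2) *: w.
Proof.
rewrite mulmx_sv; apply/matrixP => i j; rewrite (ord1 j) !mxE /= /phi; ring.
Qed.

Lemma notext (T : 'M[R]_(2,3)) (w : 'cV[R]_2) r0 r1 r2 t :
  w != 0 -> [|| r0 != 0, r1 != 0 | r2 != 0] -> 0 < t ->
  (forall b0 b1 b2 (s : bool),
     N (T *m sv b0 b1 b2 + (sg s * (t * phi r0 r1 r2 b0 b1 b2)) *: w) <= 1) ->
  ~ extreme_contraction N T.
Proof.
move=> hw hr ht H [_ hext].
have [D hDdef] : exists D, D = pmx t r0 r1 r2 w by eexists.
have h1 : opnorm N (T + D) <= 1.
  apply: opnorm_le1 => b0 b1 b2; rewrite mulmxDl hDdef pmx_sv.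
  by have := H b0 b1 b2 true; rewrite /= mul1r.
have h2 : opnorm N (T - D) <= 1.
  apply: opnorm_le1 => b0 b1 b2; rewrite mulmxBl hDdef pmx_sv -scaleNr.
  by have := H b0 b1 b2 false; rewrite /= mulN1r.
have h12 : (0 : R) < 1 / 2 by lra.
have h22 : (1 : R) / 2 < 1 by lra.
have hTe : T = 1 / 2 *: (T + D) + (1 - 1 / 2) *: (T - D).
  by apply/matrixP => i j; rewrite !mxE; field.
have := hext _ _ _ h1 h2 h12 h22 hTe.
move=> hTD.
have hD2 : (2 : R) *: D = 0.
  by apply/matrixP => i j; move/matrixP/(_ i j): hTD; rewrite !mxE => e; lra.
move/eqP: hD2; rewrite scaler_eq0 pnatr_eq0 /= => /eqP hD.
rewrite hDdef in hD.
have hc : forall k : 'I_3, pmx t r0 r1 r2 w = 0 -> t * (if (k : nat) == 0%N then r0 else if (k : nat) == 1%N then r1 else r2) = 0.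
  move=> k /matrixP h.
  have [i hi] : exists i, w i 0 != 0.
    apply/existsP; move: hw; apply: contraR; rewrite negb_exists => /forallP hw.
    apply/eqP/matrixP => i j; rewrite (ord1 j) mxE; by move: (hw i); rewrite negbK => /eqP.
  move: (h i k); rewrite !mxE => /eqP; rewrite mulf_eq0 (negbTE hi) orbF => /eqP //.
have := hc i0 hD; have := hc i1 hD; have := hc i2 hD; rewrite /= => e2 e1 e0.
move/eqP: e0; move/eqP: e1; move/eqP: e2; rewrite !mulf_eq0 (gt_eqF ht) /=.
by move=> /eqP a /eqP b /eqP c; move: hr; rewrite a b c eqxx.
Qed.

End Basics.

Section Geo.
Variable R : realType.
Variable N : 'cV[R]_2 -> R.
Hypothesis hN : is_norm2 N.

Lemma ord2P (i : 'I_2) : i = 0 \/ i = 1.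
Proof. case: i => [[|[|n]] hi]; [left|right|by []]; exact: val_inj. Qed.

Lemma lam_ex (lo v hi : R) : lo <= v -> v <= hi ->
  exists l, [/\ 0 <= l, l <= 1 & v = l * lo + (1 - l) * hi].
Proof.
move=> h1 h2; have [e|ne] := eqVneq lo hi.
  by exists 0; split; lra.
have hlt : lo < hi by rewrite lt_def eq_sym ne; apply: le_trans h2.
exists ((hi - v) / (hi - lo)); split.
- by apply: divr_ge0; lra.
- by rewrite ler_pdivrMr ?subr_gt0 //; lra.
- have hne : hi - lo != 0 by rewrite subr_eq0 eq_sym.
  by field.
Qed.

Lemma down_closed (p w : 'cV[R]_2) c l : N p <= 1 -> N (p + c *: w) <= 1 ->
  0 <= l -> l <= 1 -> N (p + (l * c) *: w) <= 1.
Proof.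
move=> hp hc h0 h1.
have -> : p + (l * c) *: w = l *: (p + c *: w) + (1 - l) *: p.
  by apply/matrixP => i j; rewrite !mxE; ring.
exact: Nconv1.
Qed.

Variables (P w : 'cV[R]_2).
Hypotheses (hP : N P = 1) (hPw : N (P + w) <= 1) (hPw' : N (P - w) <= 1) (hw : w != 0).

Definition g (X : 'cV[R]_2) := X 0 0 * w 1 0 - X 1 0 * w 0 0.

Lemma ker_g Y : g Y = 0 -> exists s, Y = s *: w.
Proof.
rewrite /g => hY.
have [h0|h0] := eqVneq (w 0 0) 0.
  have h1 : w 1 0 != 0.
    apply/negP => /eqP h1; move/negP: hw; apply; apply/eqP/matrixP => i j.
    by rewrite (ord1 j) mxE; case: (ord2P i) => ->.
  have hY0 : Y 0 0 = 0.
    move: hY; rewrite h0 mulr0 subr0 => /eqP; rewrite mulf_eq0 (negbTE h1) orbF.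
    by move/eqP.
  exists (Y 1 0 / w 1 0); apply/matrixP => i j; rewrite (ord1 j) mxE.
  case: (ord2P i) => ->; first by rewrite hY0 h0 mulr0.
  by field.
exists (Y 0 0 / w 0 0); apply/matrixP => i j; rewrite (ord1 j) mxE.
case: (ord2P i) => ->; first by field.
have e : Y 1 0 * w 0 0 = Y 0 0 * w 1 0 by lra.
apply: (mulIf h0); rewrite e; field; done.
Qed.

Lemma Pw_indep : g P != 0.
Proof.
apply/negP => /eqP /ker_g [s hs].
have hw0 : 0 < N w by apply: Ngt0.
move: hP hPw hPw'; rewrite hs.
have -> : s *: w + w = (s + 1) *: w by rewrite scalerDl scale1r.
have -> : s *: w - w = (s - 1) *: w by rewrite scalerBl scale1r.
rewrite !(NZ hN) => e1 e2 e3.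
have a1 : `|s + 1| <= `|s| by rewrite -(ler_pM2r hw0) e1.
have a2 : `|s - 1| <= `|s| by rewrite -(ler_pM2r hw0) e1.
have [hs0|hs0] := lerP 0 s.
  move: a1; rewrite !ger0_norm //; [lra | lra].
move: a2; rewrite !ltr0_norm //; [lra | lra].
Qed.

Definition f X := g X / g P.

Lemma f_lin a b X Y : f (a *: X + b *: Y) = a * f X + b * f Y.
Proof. by rewrite /f /g !mxE; field; exact: Pw_indep. Qed.

Lemma fP : f P = 1.
Proof. by rewrite /f divff //; exact: Pw_indep. Qed.

Lemma fw : f w = 0.
Proof.
rewrite /f /g; have -> : w 0 0 * w 1 0 - w 1 0 * w 0 0 = 0 by ring.
by rewrite mul0r.
Qed.

Lemma f_same U X : f U = f X -> exists s, U = X + s *: w.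
Proof.
move=> h; have [s hs] : exists s, U - X = s *: w.
  apply: ker_g; move: h; rewrite /f /g !mxE => h.
  have hg := Pw_indep; rewrite /g in hg.
  have : (U 0 0 * w 1 0 - U 1 0 * w 0 0) = (X 0 0 * w 1 0 - X 1 0 * w 0 0).
    by apply: (mulIf (invr_neq0 hg)).
  lra.
by exists s; rewrite -hs addrC subrK.
Qed.

Lemma decomp X : exists s, X = f X *: P + s *: w.
Proof.
have h : f X = f (f X *: P).
  by have := f_lin (f X) 0 P w; rewrite scale0r addr0 fP fw => ->; ring.
have [s hs] := f_same h.
by exists s.
Qed.

Lemma psi_ge1 c : 1 <= N (P + c *: w).
Proof.
have [hc|hc] := lerP 0 c.
  have h1 : 0 < 1 + c by lra.
  set t := 1 / (1 + c).
  have ht0 : 0 < t by rewrite /t divr_gt0 //.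
  have ht1 : t <= 1 by rewrite /t ler_pdivrMr //; lra.
  have e : P = t *: (P + c *: w) + (1 - t) *: (P - w).
    apply/matrixP => i j; rewrite !mxE /t; field; lra.
  have := Nconv hN (P + c *: w) (P - w) (ltW ht0) ht1.
  rewrite -e hP => H.
  have hB : (1 - t) * N (P - w) <= 1 - t.
    by rewrite -[X in _ <= X]mulr1 ler_wpM2l // subr_ge0.
  have : t * 1 <= t * N (P + c *: w) by lra.
  by rewrite ler_pM2l.
have h1 : 0 < 1 - c by lra.
set t := 1 / (1 - c).
have ht0 : 0 < t by rewrite /t divr_gt0 //.
have ht1 : t <= 1 by rewrite /t ler_pdivrMr //; lra.
have e : P = t *: (P + c *: w) + (1 - t) *: (P + w).
  apply/matrixP => i j; rewrite !mxE /t; field; lra.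
have := Nconv hN (P + c *: w) (P + w) (ltW ht0) ht1.
rewrite -e hP => H.
have hB : (1 - t) * N (P + w) <= 1 - t.
  by rewrite -[X in _ <= X]mulr1 ler_wpM2l // subr_ge0.
have : t * 1 <= t * N (P + c *: w) by lra.
by rewrite ler_pM2l.
Qed.


Lemma f_add X Y : f (X + Y) = f X + f Y.
Proof. by have := f_lin 1 1 X Y; rewrite !scale1r !mul1r. Qed.

Lemma f_opp X : f (- X) = - f X.
Proof. by have := f_lin (-1) 0 X X; rewrite scale0r addr0 scaleN1r => ->; ring. Qed.

Lemma f_scale a X : f (a *: X) = a * f X.
Proof. by have := f_lin a 0 X X; rewrite scale0r addr0 => ->; ring. Qed.

Lemma N_ge_f X : `|f X| <= N X.
Proof.
have [s hs] := decomp X.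
move: hs; move: (f X) => a hs.
have [a0|a0] := eqVneq a 0; first by rewrite a0 normr0; exact: Nge0.
have -> : X = a *: (P + (s / a) *: w).
  by rewrite hs; apply/matrixP => i j; rewrite !mxE; field.
rewrite (NZ hN) -{1}(mulr1 `|a|); apply: ler_wpM2l => //; exact: psi_ge1.
Qed.

Lemma f_bounds X : N X <= 1 -> -1 <= f X /\ f X <= 1.
Proof.
move=> h; have := le_trans (N_ge_f X) h; rewrite ler_norml => /andP [] //.
Qed.

Definition top X := forall s, 0 < s -> 1 < N (X + s *: w).

Lemma top_same X U : top X -> N U <= 1 -> f U = f X -> exists s, s <= 0 /\ U = X + s *: w.
Proof.
move=> ht hU hf; have [s hs] := f_same hf; exists s; split => //.
rewrite leNgt; apply/negP => hs0; have := ht s hs0; rewrite -hs; lra.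
Qed.

Lemma L1 X Y Z : top X -> top Y -> top Z -> N X <= 1 -> N Y <= 1 -> N Z <= 1 ->
  X + Y = Z + P -> False.
Proof.
move=> tX tY tZ nX nY nZ hrel.
have hf : f X + f Y = f Z + 1 by rewrite -f_add hrel f_add fP.
have [bx1 bx2] := f_bounds nX; have [by1 by2] := f_bounds nY; have [bz1 bz2] := f_bounds nZ.
have [l [l0 l1 hl]] := @lam_ex (f Z) (f X) 1 (ltac:(lra)) bx2.
have nU : N (l *: Z + (1 - l) *: (P + w)) <= 1 by apply: Nconv1.
have fU : f (l *: Z + (1 - l) *: (P + w)) = f X by rewrite f_lin f_add fP fw; lra.
have [s1 [hs1 hU]] := top_same tX nU fU.
have nV : N ((1 - l) *: Z + (1 - (1 - l)) *: (P + w)) <= 1 by apply: Nconv1 => //; lra.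
have fV : f ((1 - l) *: Z + (1 - (1 - l)) *: (P + w)) = f Y by rewrite f_lin f_add fP fw; lra.
have [s2 [hs2 hV]] := top_same tY nV fV.
have E : (s1 + s2 - 1) *: w = 0.
  apply/matrixP => i j; move/matrixP/(_ i j): hU; move/matrixP/(_ i j): hV.
  move/matrixP/(_ i j): hrel; rewrite !mxE => e1 e2 e3; lra.
move/eqP: E; rewrite scaler_eq0 (negbTE hw) orbF => /eqP; lra.
Qed.

Lemma NwP : N (w - P) <= 1.
Proof. by rewrite -opprB NN. Qed.

Lemma fwP : f (w - P) = -1.
Proof. by rewrite f_add f_opp fP fw; ring. Qed.

Lemma L2 X Y Z : top X -> top Y -> top Z -> N X <= 1 -> N Y <= 1 -> N Z <= 1 ->
  X = Y + Z + P -> False.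
Proof.
move=> tX tY tZ nX nY nZ hrel.
have hf : f X = f Y + f Z + 1 by rewrite hrel !f_add fP.
have [bx1 bx2] := f_bounds nX; have [by1 by2] := f_bounds nY; have [bz1 bz2] := f_bounds nZ.
have [l [l0 l1 hl]] := @lam_ex (-1) (f Y) (f X) by1 (ltac:(lra)).
have nU : N (l *: (w - P) + (1 - l) *: X) <= 1 by apply: Nconv1 => //; exact: NwP.
have fU : f (l *: (w - P) + (1 - l) *: X) = f Y by rewrite f_lin fwP; lra.
have [s1 [hs1 hU]] := top_same tY nU fU.
have nV : N ((1 - l) *: (w - P) + (1 - (1 - l)) *: X) <= 1.
  by apply: Nconv1 => //; [lra | lra | exact: NwP].
have fV : f ((1 - l) *: (w - P) + (1 - (1 - l)) *: X) = f Z by rewrite f_lin fwP; lra.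
have [s2 [hs2 hV]] := top_same tZ nV fV.
have E : (s1 + s2 - 1) *: w = 0.
  apply/matrixP => i j; move/matrixP/(_ i j): hU; move/matrixP/(_ i j): hV.
  move/matrixP/(_ i j): hrel; rewrite !mxE => e1 e2 e3; lra.
move/eqP: E; rewrite scaler_eq0 (negbTE hw) orbF => /eqP; lra.
Qed.

Lemma top_lift X : top X -> N X <= 1 -> exists s, s <= 0 /\ f X *: P + w = X + s *: w.
Proof.
move=> tX nX; have [b1 b2] := f_bounds nX.
have e : f X *: P + w = ((1 + f X) / 2) *: (P + w) + (1 - (1 + f X) / 2) *: (w - P).
  by apply/matrixP => i j; rewrite !mxE; field.
apply: top_same => //; last by rewrite f_add f_scale fP fw; ring.
rewrite e; apply: Nconv1 => //; [lra | lra | exact: NwP].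
Qed.

Lemma L0 X Y Z c : top X -> top Y -> top Z -> N X <= 1 -> N Y <= 1 -> N Z <= 1 ->
  X + Y + Z = c *: P -> False.
Proof.
move=> tX tY tZ nX nY nZ hrel.
have hc : c = f X + f Y + f Z by rewrite -!f_add hrel f_scale fP mulr1.
rewrite hc in hrel.
have [s1 [hs1 e1]] := top_lift tX nX.
have [s2 [hs2 e2]] := top_lift tY nY.
have [s3 [hs3 e3]] := top_lift tZ nZ.
have E : (s1 + s2 + s3 - 3) *: w = 0.
  apply/matrixP => i j; move/matrixP/(_ i j): e1; move/matrixP/(_ i j): e2.
  move/matrixP/(_ i j): e3; move/matrixP/(_ i j): hrel; rewrite !mxE => h0 h1 h2 h3; lra.
move/eqP: E; rewrite scaler_eq0 (negbTE hw) orbF => /eqP; lra.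
Qed.

Definition nflat p := ~ (exists t, 0 < t /\ N (p + t *: w) <= 1 /\ N (p - t *: w) <= 1).

Lemma flat_top p : N p <= 1 -> nflat p -> top p \/ top (- p).
Proof.
move=> np hnf.
have [hp|hp] := pselect (top p); first by left.
have [hq|hq] := pselect (top (- p)); first by right.
exfalso; apply: hnf.
move/existsNP: hp => [s1 /not_implyP [hs1 /negP]]; rewrite -leNgt => h1.
move/existsNP: hq => [s2 /not_implyP [hs2 /negP]]; rewrite -leNgt => h2.
have h2' : N (p + (- s2) *: w) <= 1 by rewrite -(NN hN) opprD -scaleNr opprK.
pose t := Num.min s1 s2.
have ht : 0 < t by rewrite lt_min hs1 hs2.
have t1 : t <= s1 by rewrite ge_min lexx.
have t2 : t <= s2 by rewrite ge_min lexx orbT.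
exists t; split => //; split.
  have -> : t = (t / s1) * s1 by field; rewrite gt_eqF.
  apply: down_closed => //; [by apply: divr_ge0; lra | by rewrite ler_pdivrMr // mul1r].
have -> : p - t *: w = p + ((t / s2) * (- s2)) *: w.
  by apply/matrixP => i j; rewrite !mxE; field; rewrite gt_eqF.
apply: down_closed => //; [by apply: divr_ge0; lra | by rewrite ler_pdivrMr // mul1r].
Qed.


Lemma geo p2 p3 p4 : N p2 <= 1 -> N p3 <= 1 -> N p4 <= 1 -> p2 + p3 = P + p4 ->
  nflat p2 -> nflat p3 -> nflat p4 -> False.
Proof.
move=> n2 n3 n4 hrel f2 f3 f4.
have n2' : N (- p2) <= 1 by rewrite (NN hN).
have n3' : N (- p3) <= 1 by rewrite (NN hN).
have n4' : N (- p4) <= 1 by rewrite (NN hN).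
have V : forall (A B : 'cV[R]_2), (forall i j, A i j = B i j) -> A = B.
  by move=> A B h; apply/matrixP.
case: (flat_top n2 f2) => t2; case: (flat_top n3 f3) => t3; case: (flat_top n4 f4) => t4.
- apply: (L1 t2 t3 t4) => //; apply: V => i j; move/matrixP/(_ i j): hrel; rewrite !mxE => ?; lra.
- apply: (@L0 _ _ _ 1 t2 t3 t4) => //; apply: V => i j; move/matrixP/(_ i j): hrel; rewrite !mxE => ?; lra.
- apply: (L2 t2 t3 t4) => //; apply: V => i j; move/matrixP/(_ i j): hrel; rewrite !mxE => ?; lra.
- apply: (L1 t2 t4 t3) => //; apply: V => i j; move/matrixP/(_ i j): hrel; rewrite !mxE => ?; lra.
- apply: (L2 t3 t2 t4) => //; apply: V => i j; move/matrixP/(_ i j): hrel; rewrite !mxE => ?; lra.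
- apply: (L1 t3 t4 t2) => //; apply: V => i j; move/matrixP/(_ i j): hrel; rewrite !mxE => ?; lra.
- apply: (@L0 _ _ _ (-1) t2 t3 t4) => //; apply: V => i j; move/matrixP/(_ i j): hrel; rewrite !mxE => ?; lra.
- apply: (L2 t4 t2 t3) => //; apply: V => i j; move/matrixP/(_ i j): hrel; rewrite !mxE => ?; lra.
Qed.

End Geo.

Section C.
Variable R : realType.
Variable N : 'cV[R]_2 -> R.
Hypothesis hN : is_norm2 N.

Lemma sg_mul (x y : bool) : sg R x * sg R y = sg R (x == y).
Proof. by case: x; case: y; rewrite /sg /=; ring. Qed.

Lemma sv_neg b0 b1 b2 : sv R (~~ b0) (~~ b1) (~~ b2) = - sv R b0 b1 b2.
Proof.
apply/matrixP => i j; rewrite (ord1 j) !mxE.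
by case: (ord3P i) => [->|[->|->]]; rewrite /= sgN.
Qed.

Lemma sv_eqE a0 a1 a2 b0 b1 b2 :
  (sv R a0 a1 a2 == sv R b0 b1 b2) = [&& a0 == b0, a1 == b1 & a2 == b2].
Proof.
apply/eqP/and3P.
  move/matrixP => h; have h0 := h i0 0; have h1 := h i1 0; have h2 := h i2 0.
  move: h0 h1 h2; clear h; rewrite !mxE /= /sg.
  by case: a0; case: b0; case: a1; case: b1; case: a2; case: b2 => //= *; lra.
by case=> /eqP -> /eqP -> /eqP ->.
Qed.

Lemma reidx (T : 'M[R]_(2,3)) b0 b1 b2 c0 c1 c2 :
  T *m sv R c0 c1 c2 = sg R (c0 == b0) *: (sg R b0 *: col i0 T)
     + sg R (c1 == b1) *: (sg R b1 *: col i1 T) + sg R (c2 == b2) *: (sg R b2 *: col i2 T).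
Proof. by rewrite mulmx_sv !scalerA -!sg_mul -!mulrA !sg_sq !mulr1. Qed.

Lemma phi_reidx b0 b1 b2 r0 r1 r2 c0 c1 c2 :
  phi (sg R b0 * r0) (sg R b1 * r1) (sg R b2 * r2) c0 c1 c2
  = phi r0 r1 r2 (c0 == b0) (c1 == b1) (c2 == b2).
Proof. by rewrite /phi !mulrA !sg_mul. Qed.


Definition fl (w p : 'cV[R]_2) a := N (p + a *: w) <= 1 /\ N (p - a *: w) <= 1.

Lemma fl_congr w X X' a a' : X = X' -> a = a' -> fl w X' a' -> fl w X a.
Proof. by move=> -> ->. Qed.

Lemma fl_congrN w X X' a a' : X = X' -> a = - a' -> fl w X' a' -> fl w X a.
Proof. by move=> -> -> [h1 h2]; rewrite /fl scaleNr opprK; split. Qed.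

Lemma fl_neg w p a : fl w p a -> fl w (- p) a.
Proof.
case=> h1 h2; split.
  by rewrite -(NN hN) opprD opprK.
by rewrite -(NN hN) opprD !opprK.
Qed.

Lemma fl_0 w p : N p <= 1 -> fl w p 0.
Proof. by move=> h; rewrite /fl scale0r addr0 subr0. Qed.

Lemma fl_down w p a c : N p <= 1 -> fl w p a -> 0 <= c -> c <= a -> fl w p c.
Proof.
move=> hp [h1 h2] hc hca.
have [a0|a0] := eqVneq a 0.
  have -> : c = 0 by apply/eqP; rewrite eq_le hc andbT -a0.
  exact: fl_0.
have ha : 0 < a by rewrite lt_def a0 (le_trans hc hca).
have hl0 : 0 <= c / a by apply: divr_ge0 => //; exact: ltW.
have hl1 : c / a <= 1 by rewrite ler_pdivrMr // mul1r.
split.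
  have -> : c = (c / a) * a by field.
  exact: down_closed.
have -> : p - c *: w = p + ((c / a) * (- a)) *: w.
  by apply/matrixP => i j; rewrite !mxE; field.
apply: down_closed => //; by rewrite scaleNr.
Qed.

Lemma fl_use w p a s : fl w p a -> N (p + (sg R s * a) *: w) <= 1.
Proof. by case: s => -[h1 h2]; rewrite /sg ?mul1r ?mulN1r ?scaleNr. Qed.

Lemma comb2 (Q : bool -> R -> Prop) :
  (forall b, exists t0, 0 < t0 /\ forall t, 0 < t -> t <= t0 -> Q b t) ->
  exists t0, 0 < t0 /\ forall t, 0 < t -> t <= t0 -> forall b, Q b t.
Proof.
move=> H; have [ta [hta Ha]] := H true; have [tb [htb Hb]] := H false.
exists (Num.min ta tb); split; first by rewrite lt_min hta htb.
move=> t ht htm [].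
  by apply: Ha => //; apply: (le_trans htm); rewrite ge_min lexx.
by apply: Hb => //; apply: (le_trans htm); rewrite ge_min lexx orbT.
Qed.

Lemma comb8 (Q : bool -> bool -> bool -> R -> Prop) :
  (forall b0 b1 b2, exists t0, 0 < t0 /\ forall t, 0 < t -> t <= t0 -> Q b0 b1 b2 t) ->
  exists t, 0 < t /\ forall b0 b1 b2, Q b0 b1 b2 t.
Proof.
move=> H.
have [t0 [ht0 Ht]] : exists t0, 0 < t0 /\ forall t, 0 < t -> t <= t0 ->
    forall b0, (fun b0 t => forall b1 b2, Q b0 b1 b2 t) b0 t.
  apply: comb2 => b0.
  have [t1 [ht1 Ht1]] : exists t0, 0 < t0 /\ forall t, 0 < t -> t <= t0 ->
      forall b1, (fun b1 t => forall b2, Q b0 b1 b2 t) b1 t.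
    apply: comb2 => b1; apply: comb2 => b2; exact: H.
  by exists t1; split => // t ht htt b1 b2; apply: Ht1.
by exists t0; split => // b0 b1 b2; apply: Ht => //.
Qed.

Lemma small_pert (T : 'M[R]_(2,3)) (w : 'cV[R]_2) (r0 r1 r2 : R) :
  w != 0 -> [|| r0 != 0, r1 != 0 | r2 != 0] ->
  (forall b0 b1 b2, N (T *m sv R b0 b1 b2) <= 1) ->
  (forall b0 b1 b2, phi r0 r1 r2 b0 b1 b2 = 0 \/ N (T *m sv R b0 b1 b2) < 1) ->
  ~ extreme_contraction N T.
Proof.
move=> hw hr hV hS.
pose Q := (fun b0 b1 b2 t => forall s : bool,
   N (T *m sv R b0 b1 b2 + (sg R s * (t * phi r0 r1 r2 b0 b1 b2)) *: w) <= 1).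
have H8 : forall b0 b1 b2, exists t0, 0 < t0 /\ forall t, 0 < t -> t <= t0 -> Q b0 b1 b2 t.
  move=> b0 b1 b2; rewrite /Q; case: (hS b0 b1 b2) => [h0|hlt].
    by exists 1; split => // t ht _ s; rewrite h0 mulr0 mulr0 scale0r addr0.
  set n := N (T *m sv R b0 b1 b2) in hlt *.
  set K := `|phi r0 r1 r2 b0 b1 b2| * N w.
  have hK : 0 <= K by apply: mulr_ge0; [exact: normr_ge0 | exact: Nge0].
  exists ((1 - n) / (K + 1)); split.
    by apply: divr_gt0; lra.
  move=> t' ht' ht's s; apply: (le_trans (ND hN _ _)).
  rewrite (NZ hN) !normrM sg_norm mul1r (gtr0_norm ht') -mulrA -/K -/n.
  have e : (1 - n) / (K + 1) * (K + 1) = 1 - n by field; lra.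
  have : t' * K <= (1 - n) / (K + 1) * (K + 1).
    apply: ler_pM => //; [exact: ltW | lra].
  lra.
have [t [ht Ht]] := @comb8 Q H8.
exact: (notext hN hw hr ht).
Qed.

Lemma kill (D : 'M[R]_(2,3)) : col i0 D = 0 -> col i1 D = 0 -> col i2 D = 0 -> D = 0.
Proof.
move=> h0 h1 h2; apply/matrixP => i j; rewrite mxE.
case: (ord3P j) => [->|[->|->]].
- by move/matrixP/(_ i 0): h0; rewrite !mxE.
- by move/matrixP/(_ i 0): h1; rewrite !mxE.
- by move/matrixP/(_ i 0): h2; rewrite !mxE.
Qed.


Ltac veq := apply/matrixP => ? ?; rewrite !mxE; lra.
Ltac flsolve H := first
  [ apply: (fl_congr _ _ H); [veq | lra]
  | apply: (fl_congrN _ _ H); [veq | lra]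
  | apply: (fl_congr _ _ (fl_neg H)); [veq | lra]
  | apply: (fl_congrN _ _ (fl_neg H)); [veq | lra] ].

Lemma check2 (w d0 d1 d2 : 'cV[R]_2) t :
  (forall e0 e1 e2, N (sg R e0 *: d0 + sg R e1 *: d1 + sg R e2 *: d2) <= 1) ->
  fl w (d0 + d1 + d2) t -> fl w (d0 + d1 - d2) t ->
  forall e0 e1 e2, fl w (sg R e0 *: d0 + sg R e1 *: d1 + sg R e2 *: d2)
                        (t * phi (1/2) (1/2) 0 e0 e1 e2).
Proof.
move=> hV hA hB e0 e1 e2; have hV' := hV e0 e1 e2; have hZ := fl_0 w hV'.
case: e0 e1 e2 hV' hZ => [] [] [] hV' hZ; rewrite /phi /sg /= in hZ *.
all: first [flsolve hA | flsolve hB | flsolve hZ].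
Qed.

Lemma check3 (w d0 d1 d2 : 'cV[R]_2) t :
  (forall e0 e1 e2, N (sg R e0 *: d0 + sg R e1 *: d1 + sg R e2 *: d2) <= 1) ->
  fl w (d0 + d1 + d2) t -> fl w (d0 - d1 + d2) t ->
  forall e0 e1 e2, fl w (sg R e0 *: d0 + sg R e1 *: d1 + sg R e2 *: d2)
                        (t * phi (1/2) 0 (1/2) e0 e1 e2).
Proof.
move=> hV hA hB e0 e1 e2; have hV' := hV e0 e1 e2; have hZ := fl_0 w hV'.
case: e0 e1 e2 hV' hZ => [] [] [] hV' hZ; rewrite /phi /sg /= in hZ *.
all: first [flsolve hA | flsolve hB | flsolve hZ].
Qed.

Lemma check4 (w d0 d1 d2 : 'cV[R]_2) t :
  (forall e0 e1 e2, N (sg R e0 *: d0 + sg R e1 *: d1 + sg R e2 *: d2) <= 1) ->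
  fl w (d0 + d1 + d2) t -> fl w (d0 - d1 - d2) t ->
  forall e0 e1 e2, fl w (sg R e0 *: d0 + sg R e1 *: d1 + sg R e2 *: d2)
                        (t * phi 0 (1/2) (1/2) e0 e1 e2).
Proof.
move=> hV hA hB e0 e1 e2; have hV' := hV e0 e1 e2; have hZ := fl_0 w hV'.
case: e0 e1 e2 hV' hZ => [] [] [] hV' hZ; rewrite /phi /sg /= in hZ *.
all: first [flsolve hA | flsolve hB | flsolve hZ].
Qed.

Lemma killA (D : 'M[R]_(2,3)) b0 b1 b2 c0 c1 c2 a0 a1 a2 :
  D *m sv R b0 b1 b2 = 0 -> D *m sv R c0 c1 c2 = 0 -> D *m sv R a0 a1 a2 = 0 ->
  (forall x0 x1 x2 : R,
     sg R b0 * x0 + sg R b1 * x1 + sg R b2 * x2 = 0 ->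
     sg R c0 * x0 + sg R c1 * x1 + sg R c2 * x2 = 0 ->
     sg R a0 * x0 + sg R a1 * x1 + sg R a2 * x2 = 0 -> [/\ x0 = 0, x1 = 0 & x2 = 0]) ->
  D = 0.
Proof.
rewrite !mulmx_sv => h1 h2 h3 H.
have E : forall i, [/\ D i i0 = 0, D i i1 = 0 & D i i2 = 0].
  move=> i; apply: H.
  - by move/matrixP/(_ i 0): h1; rewrite !mxE.
  - by move/matrixP/(_ i 0): h2; rewrite !mxE.
  - by move/matrixP/(_ i 0): h3; rewrite !mxE.
apply: kill; apply/matrixP => i j; rewrite (ord1 j) !mxE; by case: (E i).
Qed.

End C.

Section D.
Variable R : realType.
Variable N : 'cV[R]_2 -> R.
Hypothesis hN : is_norm2 N.

Lemma back (T : 'M[R]_(2,3)) : opnorm N T = 1 ->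
  (exists s : seq 'cV[R]_3, uniq s /\ (6 <= size s)%N /\
      (forall x, x \in s -> (MT N T `&` extreme_point (@ballX R)) x)) ->
  (forall x, (MT N T `&` extreme_point (@ballX R)) x ->
      extreme_point (ballY N) (T *m x)) ->
  extreme_contraction N T.
Proof.
move=> hT [s [hu [hs Hs]]] H2; split; first by rewrite /= hT.
move=> y z t hy hz ht0 ht1 he.
have hk : forall x, x \in s -> (y - z) *m x = 0.
  move=> x /Hs [hMT hE].
  have hx : ballX x by case: hE.
  have := (H2 x (conj hMT hE)).2 (y *m x) (z *m x) t.
  rewrite /ballY /=.
  move=> /(_ (le_trans (N_le_opnorm hN y hx) hy) (le_trans (N_le_opnorm hN z hx) hz) ht0 ht1).
  rewrite he mulmxDl -!scalemxAl => /(_ erefl) e.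
  by rewrite mulmxBl e subrr.
apply/eqP; rewrite -subr_eq0; apply/eqP.
move: hk; move: (y - z) => D hk.
pose L8 := [:: sv R true true true; sv R (~~ true) (~~ true) (~~ true);
              sv R true true false; sv R (~~ true) (~~ true) (~~ false);
              sv R true false true; sv R (~~ true) (~~ false) (~~ true);
              sv R true false false; sv R (~~ true) (~~ false) (~~ false)].
have hsub : {subset s <= [seq u <- L8 | D *m u == 0]}.
  move=> x hx; rewrite mem_filter hk // eqxx /=.
  have [b0 [b1 [b2 e]]] := ext_sv (Hs x hx).2; rewrite e.
  by rewrite /L8 !inE !sv_eqE; clear e; case: b0; case: b1; case: b2.
have := leq_trans hs (uniq_leq_size hu hsub).
rewrite /L8 !sv_neg /= !mulmxN !oppr_eq0.
case: (D *m sv R true true true =P 0) => h1; case: (D *m sv R true true false =P 0) => h2;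
case: (D *m sv R true false true =P 0) => h3; case: (D *m sv R true false false =P 0) => h4 //=.
- move=> _; apply: (killA h1 h2 h3) => x0 x1 x2; rewrite /sg /= => *; split; lra.
- move=> _; apply: (killA h1 h2 h3) => x0 x1 x2; rewrite /sg /= => *; split; lra.
- move=> _; apply: (killA h1 h2 h4) => x0 x1 x2; rewrite /sg /= => *; split; lra.
- move=> _; apply: (killA h1 h3 h4) => x0 x1 x2; rewrite /sg /= => *; split; lra.
- move=> _; apply: (killA h2 h3 h4) => x0 x1 x2; rewrite /sg /= => *; split; lra.
Qed.


Lemma all_mem {T : eqType} (P : T -> Prop) (s : seq T) :
  foldr (fun x acc => P x /\ acc) True s -> forall x, x \in s -> P x.
Proof.
elim: s => //= a s IH [ha hs] x; rewrite inE => /orP [/eqP -> //| hx]; exact: IH.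
Qed.

Lemma all_mem6 {T : eqType} (P : T -> Prop) a b c d e f :
  P a -> P b -> P c -> P d -> P e -> P f -> forall x, x \in [:: a; b; c; d; e; f] -> P x.
Proof. move=> ha hb hc hd he hf; apply: all_mem; by do 6 (split; first done). Qed.

Lemma fwd_count (T : 'M[R]_(2,3)) : opnorm N T = 1 -> extreme_contraction N T ->
  exists s : seq 'cV[R]_3, uniq s /\ (6 <= size s)%N /\
      (forall x, x \in s -> (MT N T `&` extreme_point (@ballX R)) x).
Proof.
move=> hT hext.
have hV : forall b0 b1 b2, N (T *m sv R b0 b1 b2) <= 1.
  by move=> b0 b1 b2; rewrite -hT; exact: opnorm_sv.
have hM : forall b0 b1 b2, N (T *m sv R b0 b1 b2) = 1 ->
    (MT N T `&` extreme_point (@ballX R)) (sv R b0 b1 b2).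
  move=> b0 b1 b2 h; split; last exact: sv_extreme.
  by split; [exact: linf3_sv | rewrite h hT].
have hneg : forall b0 b1 b2, N (T *m sv R (~~ b0) (~~ b1) (~~ b2)) = N (T *m sv R b0 b1 b2).
  by move=> b0 b1 b2; rewrite sv_neg mulmxN (NN hN).
have hlt : forall b0 b1 b2, N (T *m sv R b0 b1 b2) != 1 -> N (T *m sv R b0 b1 b2) < 1.
  by move=> b0 b1 b2 h; rewrite lt_neqAle h hV.
have hw : (const_mx 1 : 'cV[R]_2) != 0.
  apply/negP => /eqP /matrixP /(_ 0 0); rewrite !mxE => /eqP; by rewrite oner_eq0.
have n1 := hneg true true true; have n2 := hneg true true false.
have n3 := hneg true false true; have n4 := hneg true false false.
rewrite /= in n1 n2 n3 n4.
case: (eqVneq (N (T *m sv R true true true)) 1) => a1;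
case: (eqVneq (N (T *m sv R true true false)) 1) => a2;
case: (eqVneq (N (T *m sv R true false true)) 1) => a3;
case: (eqVneq (N (T *m sv R true false false)) 1) => a4.
all: try (have l1 := hlt _ _ _ a1; have l1' := l1; rewrite -n1 in l1').
all: try (have l2 := hlt _ _ _ a2; have l2' := l2; rewrite -n2 in l2').
all: try (have l3 := hlt _ _ _ a3; have l3' := l3; rewrite -n3 in l3').
all: try (have l4 := hlt _ _ _ a4; have l4' := l4; rewrite -n4 in l4').
- exists [:: sv R true true true; sv R false false false; sv R true true false; sv R false false true; sv R true false true; sv R false true false]; split; [by rewrite /= !inE !sv_eqE | split; [by [] | apply: all_mem6; apply: hM; rewrite ?n1 ?n2 ?n3 ?n4; assumption]].
- exists [:: sv R true true true; sv R false false false; sv R true true false; sv R false false true; sv R true false true; sv R false true false]; split; [by rewrite /= !inE !sv_eqE | split; [by [] | apply: all_mem6; apply: hM; rewrite ?n1 ?n2 ?n3 ?n4; assumption]].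
- exists [:: sv R true true true; sv R false false false; sv R true true false; sv R false false true; sv R true false false; sv R false true true]; split; [by rewrite /= !inE !sv_eqE | split; [by [] | apply: all_mem6; apply: hM; rewrite ?n1 ?n2 ?n3 ?n4; assumption]].
- exfalso; apply: (small_pert hN (r0:=1) (r1:=-1) (r2:=0) hw _ hV _ hext); [by rewrite ?eqxx ?oner_eq0 ?oppr_eq0 | move=> [] [] []; rewrite /phi /sg /=; first [left; lra | right; assumption]].
- exists [:: sv R true true true; sv R false false false; sv R true false true; sv R false true false; sv R true false false; sv R false true true]; split; [by rewrite /= !inE !sv_eqE | split; [by [] | apply: all_mem6; apply: hM; rewrite ?n1 ?n2 ?n3 ?n4; assumption]].
- exfalso; apply: (small_pert hN (r0:=1) (r1:=0) (r2:=-1) hw _ hV _ hext); [by rewrite ?eqxx ?oner_eq0 ?oppr_eq0 | move=> [] [] []; rewrite /phi /sg /=; first [left; lra | right; assumption]].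
- exfalso; apply: (small_pert hN (r0:=0) (r1:=1) (r2:=-1) hw _ hV _ hext); [by rewrite ?eqxx ?oner_eq0 ?oppr_eq0 | move=> [] [] []; rewrite /phi /sg /=; first [left; lra | right; assumption]].
- exfalso; apply: (small_pert hN (r0:=0) (r1:=1) (r2:=-1) hw _ hV _ hext); [by rewrite ?eqxx ?oner_eq0 ?oppr_eq0 | move=> [] [] []; rewrite /phi /sg /=; first [left; lra | right; assumption]].
- exists [:: sv R true true false; sv R false false true; sv R true false true; sv R false true false; sv R true false false; sv R false true true]; split; [by rewrite /= !inE !sv_eqE | split; [by [] | apply: all_mem6; apply: hM; rewrite ?n1 ?n2 ?n3 ?n4; assumption]].
- exfalso; apply: (small_pert hN (r0:=0) (r1:=1) (r2:=1) hw _ hV _ hext); [by rewrite ?eqxx ?oner_eq0 ?oppr_eq0 | move=> [] [] []; rewrite /phi /sg /=; first [left; lra | right; assumption]].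
- exfalso; apply: (small_pert hN (r0:=1) (r1:=0) (r2:=1) hw _ hV _ hext); [by rewrite ?eqxx ?oner_eq0 ?oppr_eq0 | move=> [] [] []; rewrite /phi /sg /=; first [left; lra | right; assumption]].
- exfalso; apply: (small_pert hN (r0:=1) (r1:=0) (r2:=1) hw _ hV _ hext); [by rewrite ?eqxx ?oner_eq0 ?oppr_eq0 | move=> [] [] []; rewrite /phi /sg /=; first [left; lra | right; assumption]].
- exfalso; apply: (small_pert hN (r0:=1) (r1:=1) (r2:=0) hw _ hV _ hext); [by rewrite ?eqxx ?oner_eq0 ?oppr_eq0 | move=> [] [] []; rewrite /phi /sg /=; first [left; lra | right; assumption]].
- exfalso; apply: (small_pert hN (r0:=1) (r1:=1) (r2:=0) hw _ hV _ hext); [by rewrite ?eqxx ?oner_eq0 ?oppr_eq0 | move=> [] [] []; rewrite /phi /sg /=; first [left; lra | right; assumption]].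
- exfalso; apply: (small_pert hN (r0:=1) (r1:=1) (r2:=0) hw _ hV _ hext); [by rewrite ?eqxx ?oner_eq0 ?oppr_eq0 | move=> [] [] []; rewrite /phi /sg /=; first [left; lra | right; assumption]].
- exfalso; apply: (small_pert hN (r0:=1) (r1:=1) (r2:=0) hw _ hV _ hext); [by rewrite ?eqxx ?oner_eq0 ?oppr_eq0 | move=> [] [] []; rewrite /phi /sg /=; first [left; lra | right; assumption]].
Qed.


End D.

Section D2.
Variable R : realType.
Variable N : 'cV[R]_2 -> R.
Hypothesis hN : is_norm2 N.

Lemma eqbb (e b : bool) : ((e == b) == b) = e.
Proof. by case: e; case: b. Qed.

Lemma sg_neq0 b : sg R b != 0.
Proof. by case: b; rewrite /sg ?oppr_eq0 oner_eq0. Qed.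

Lemma fwd_ext (T : 'M[R]_(2,3)) : opnorm N T = 1 -> extreme_contraction N T ->
  forall x, (MT N T `&` extreme_point (@ballX R)) x -> extreme_point (ballY N) (T *m x).
Proof.
move=> hT hext x [[hx1 hx2] hxe].
have [b0 [b1 [b2 ex]]] := ext_sv hxe.
rewrite ex in hx2 *.
have hP : N (T *m sv R b0 b1 b2) = 1 by rewrite hx2 hT.
split; first by rewrite /ballY /= hP.
move=> y z t hy hz ht0 ht1 he.
case: (eqVneq y z) => // hne; exfalso.
rewrite /ballY /= in hy hz.
set m := Num.min t (1 - t).
have hm0 : 0 < m by rewrite lt_min ht0 subr_gt0 ht1.
have hmt : m <= t by rewrite ge_min lexx.
have hm1 : m <= 1 - t by rewrite ge_min lexx orbT.
move: hm0 hmt hm1; move: m => m hm0 hmt hm1.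
have hw : m *: (y - z) != 0 by rewrite scaler_eq0 negb_or gt_eqF // subr_eq0 hne.
have [P eP] : exists P, P = T *m sv R b0 b1 b2 by eexists.
rewrite -eP in he hP.
have hPw : N (P + m *: (y - z)) <= 1.
  have -> : P + m *: (y - z) = (t + m) *: y + (1 - (t + m)) *: z.
    by rewrite he; apply/matrixP => i j; rewrite !mxE; ring.
  by apply: Nconv1 => //; lra.
have hPw' : N (P - m *: (y - z)) <= 1.
  have -> : P - m *: (y - z) = (t - m) *: y + (1 - (t - m)) *: z.
    by rewrite he; apply/matrixP => i j; rewrite !mxE; ring.
  by apply: Nconv1 => //; lra.
move: hw hPw hPw'; move: (m *: (y - z)) => w hw hPw hPw'.
have [d0 hd0] : exists d, d = sg R b0 *: col i0 T by eexists.
have [d1 hd1] : exists d, d = sg R b1 *: col i1 T by eexists.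
have [d2 hd2] : exists d, d = sg R b2 *: col i2 T by eexists.
have hre : forall c0 c1 c2, T *m sv R c0 c1 c2
    = sg R (c0 == b0) *: d0 + sg R (c1 == b1) *: d1 + sg R (c2 == b2) *: d2.
  by move=> c0 c1 c2; rewrite hd0 hd1 hd2 (reidx T b0 b1 b2).
have hV : forall e0 e1 e2, N (sg R e0 *: d0 + sg R e1 *: d1 + sg R e2 *: d2) <= 1.
  move=> e0 e1 e2; have := opnorm_sv hN T (e0 == b0) (e1 == b1) (e2 == b2).
  by rewrite hre !eqbb hT.
have HP : P = d0 + d1 + d2 by rewrite eP hre !eqxx /sg !scale1r.
have nv : forall e0 e1 e2 X, X = sg R e0 *: d0 + sg R e1 *: d1 + sg R e2 *: d2 -> N X <= 1.
  by move=> e0 e1 e2 X ->; exact: hV.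
have flP : fl N w (d0 + d1 + d2) 1 by rewrite -HP /fl scale1r.
have key : forall r0 r1 r2 q, [|| r0 != 0, r1 != 0 | r2 != 0] ->
    (forall t', 0 < t' -> t' <= 1 -> fl N w q t' -> forall e0 e1 e2,
       fl N w (sg R e0 *: d0 + sg R e1 *: d1 + sg R e2 *: d2) (t' * phi r0 r1 r2 e0 e1 e2)) ->
    N q <= 1 -> nflat N w q.
  move=> r0 r1 r2 q hr hc hq [t2 [ht2 hf]].
  have ht' : 0 < Num.min t2 1 by rewrite lt_min ht2 ltr01.
  have ht'1 : Num.min t2 1 <= 1 by rewrite ge_min lexx orbT.
  have ht'2 : Num.min t2 1 <= t2 by rewrite ge_min lexx.
  apply: (notext hN (T := T) (w := w) (r0 := sg R b0 * r0) (r1 := sg R b1 * r1)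
     (r2 := sg R b2 * r2) (t := Num.min t2 1) hw _ ht' _ hext).
    move: hr; rewrite !mulf_eq0 !negb_or !sg_neq0 /=; done.
  move=> c0 c1 c2 s; rewrite hre phi_reidx; apply: fl_use.
  apply: hc; [exact: ht' | exact: ht'1 | ].
  by apply: (fl_down hN hq hf) => //; exact: ltW.
have h12 : (1 / 2 : R) != 0 by rewrite div1r invr_eq0 pnatr_eq0.
apply: (geo hN hP hPw hPw' hw (p2 := d0 + d1 - d2) (p3 := d0 - d1 + d2) (p4 := d0 - d1 - d2)).
- by apply: (nv true true false); rewrite /sg scaleN1r !scale1r.
- by apply: (nv true false true); rewrite /sg scaleN1r !scale1r.
- by apply: (nv true false false); rewrite /sg !scaleN1r !scale1r.
- by rewrite HP; apply/matrixP => ? ?; rewrite !mxE; lra.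
- apply: (key (1/2) (1/2) 0); first by rewrite h12 ?eqxx.
    move=> t' ht' ht'1 hq; apply: check2 => //.
    by apply: (fl_down hN _ flP) => //; [rewrite -HP hP | exact: ltW].
  by apply: (nv true true false); rewrite /sg scaleN1r !scale1r.
- apply: (key (1/2) 0 (1/2)); first by rewrite h12 ?eqxx.
    move=> t' ht' ht'1 hq; apply: check3 => //.
    by apply: (fl_down hN _ flP) => //; [rewrite -HP hP | exact: ltW].
  by apply: (nv true false true); rewrite /sg scaleN1r !scale1r.
- apply: (key 0 (1/2) (1/2)); first by rewrite h12 ?eqxx.
    move=> t' ht' ht'1 hq; apply: check4 => //.
    by apply: (fl_down hN _ flP) => //; [rewrite -HP hP | exact: ltW].
  by apply: (nv true false false); rewrite /sg !scaleN1r !scale1r.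
Qed.

End D2.

Unset Implicit Arguments.

Theorem theorem3p11 (R : realType) (N : 'cV[R]_2 -> R)
  (hN : is_norm2 N) (hpoly : polygonal N) (T : 'M[R]_(2,3))
  (hT : opnorm N T = 1) :
  extreme_contraction N T <->
  ((exists s : seq 'cV[R]_3, uniq s /\ (6 <= size s)%N /\
      (forall x, x \in s -> (MT N T `&` extreme_point (@ballX R)) x)) /\
   (forall x, (MT N T `&` extreme_point (@ballX R)) x ->
      extreme_point (ballY N) (T *m x))).
Proof.
split.
- move=> hext; split; [exact: (fwd_count hN hT hext) | exact: (fwd_ext hN hT hext)].
- by case=> H1 H2; exact: (back hN hT H1 H2).
Qed.
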